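(* Consider the ride-hailing model in the context and a demand vector $\bm b^C$ with $0\le b^C_i\le b_i$ for all $i$. If $(\bm w^C,\bm x^C)$ is a CV equilibrium for $\bm b^C$, then $\bm x^C$ is an optimal solution of the convex program $\mathcal{CV}(\bm b^C)$ and $\bm w^C$ is a vector of Lagrange multipliers of its capacity constraints $\sum_{j}x_{ji}\le b^C_i$.
   Context: Model. There are $L$ regions $\{1,\dots,L\}$. For regions $i,j$, $b_{ij}\ge0$ is the rate of customers from $i$ to $j$; $b_i=\sum_j b_{ij}$ (assumed $>0$), $q_{ij}=b_{ij}/b_i$. Travel times satisfy $t_{ij}>0$ for $i\neq j$, $t_{ii}=0$. Constants: $p>0$, $c\ge0$, $R\in(0,1)$, CV fleet mass $N>0$. For $i,\alpha$: $\tau^{dr}_{i\alpha}=t_{i\alpha}+\sum_j q_{\alpha j}t_{\alpha j}$ and $r^C_{i\alpha}=p(1-R)\sum_j q_{\alpha j}t_{\alpha j}-c\tau^{dr}_{i\alpha}$. A matrix $\bm x=(x_{i\alpha})\in\mathbb R^{L\times L}_{\ge0}$ satisfies flow balance if $\sum_j(\sum_k x_{kj})q_{ji}=\sum_\alpha x_{i\alpha}$ for all $i$. CV equilibrium for $\bm b^C$: a pair $(\bm w^C,\bm x^C)$, $\bm w^C\in\mathbb R^L_{\ge0}$, $\bm x^C\in\mathbb R^{L\times L}_{\ge0}$, such that (i) $\bm x^C$ maximizes $\sum_{i,\alpha}r^C_{i\alpha}x_{i\alpha}$ over all $\bm x\ge0$ satisfying flow balance and $\sum_{i,\alpha}(\tau^{dr}_{i\alpha}+w^C_\alpha)x_{i\alpha}=N$;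 (ii) $\sum_j x^C_{ji}\le b^C_i$ for all $i$; (iii) $w^C_i(b^C_i-\sum_j x^C_{ji})=0$ for all $i$. $\mathcal{CV}(\bm b^C)$: maximize $N\log\sum_{i,\alpha}r^C_{i\alpha}x_{i\alpha}-\sum_{i,\alpha}\tau^{dr}_{i\alpha}x_{i\alpha}$ over $\bm x\ge0$ satisfying flow balance and $\sum_j x_{ji}\le b^C_i$ for all $i$. *)

(* Defs.v *)
From HB Require Import structures.
From mathcomp Require Import all_boot all_order all_algebra.
From mathcomp Require Import all_classical all_reals all_analysis.
Set Implicit Arguments. Unset Strict Implicit. Unset Printing Implicit Defensive.
Import Order.TTheory GRing.Theory Num.Theory.
Local Open Scope ring_scope.

Section RideHailing.
Variables (R : realType) (L : nat).
Implicit Types (b t x y : 'I_L -> 'I_L -> R) (w bC : 'I_L -> R).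

Definition brow b (i : 'I_L) : R := \sum_(j < L) b i j.
Definition qmat b (i j : 'I_L) : R := b i j / brow b i.
Definition tau_dr b t (i a : 'I_L) : R := t i a + \sum_(j < L) qmat b a j * t a j.
Definition rC b t (p rho c : R) (i a : 'I_L) : R :=
  p * (1 - rho) * (\sum_(j < L) qmat b a j * t a j) - c * tau_dr b t i a.

Definition nonneg_mat x := forall i a : 'I_L, 0 <= x i a.

Definition flow_balance b x :=
  forall i : 'I_L,
    \sum_(j < L) (\sum_(k < L) x k j) * qmat b j i = \sum_(a < L) x i a.

Definition revenue b t p rho c x : R :=
  \sum_(i < L) \sum_(a < L) rC b t p rho c i a * x i a.
Definition drive_time b t x : R :=
  \sum_(i < L) \sum_(a < L) tau_dr b t i a * x i a.
Definition fleet_use b t w x : R :=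
  \sum_(i < L) \sum_(a < L) (tau_dr b t i a + w a) * x i a.
Definition inflow x (i : 'I_L) : R := \sum_(j < L) x j i.

Definition CV_equilibrium b t (p rho c N : R) bC w x :=
  [/\ (forall i, 0 <= w i),
      [/\ nonneg_mat x, flow_balance b x & fleet_use b t w x = N],
      (forall y, nonneg_mat y -> flow_balance b y -> fleet_use b t w y = N ->
         revenue b t p rho c y <= revenue b t p rho c x),
      (forall i, inflow x i <= bC i) &
      (forall i, w i * (bC i - inflow x i) = 0)].

(* Objective of CV(bC): N log(sum r x) - sum tau x, with log s = -oo for s <= 0. *)
Definition CV_obj b t (p rho c N : R) x : \bar R :=
  if 0 < revenue b t p rho c x
  then (N * ln (revenue b t p rho c x) - drive_time b t x)%:E
  else -oo%E.

Definition CV_feasible b bC x :=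
  [/\ nonneg_mat x, flow_balance b x & forall i, inflow x i <= bC i].

Definition CV_optimal b t (p rho c N : R) bC x :=
  CV_feasible b bC x /\
  forall y, CV_feasible b bC y -> (CV_obj b t p rho c N y <= CV_obj b t p rho c N x)%E.

Definition CV_lagrangian b t (p rho c N : R) bC w x : \bar R :=
  (CV_obj b t p rho c N x + (\sum_(i < L) w i * (bC i - inflow x i))%:E)%E.

(* w is a vector of Lagrange multipliers of the capacity constraints at x:
   dual feasibility, complementary slackness, and x maximizes the Lagrangian
   over the remaining constraints (x >= 0, flow balance). *)
Definition capacity_multipliers b t (p rho c N : R) bC w x :=
  [/\ (forall i, 0 <= w i),
      (forall i, w i * (bC i - inflow x i) = 0) &
      forall y, nonneg_mat y -> flow_balance b y ->
        (CV_lagrangian b t p rho c N bC w y <= CV_lagrangian b t p rho c N bC w x)%E].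

End RideHailing.

(* Main.v *)
Require Import Defs.
From HB Require Import structures.
From mathcomp Require Import all_boot all_order all_algebra.
From mathcomp Require Import all_classical all_reals all_analysis.
From mathcomp Require Import ring lra.
Import Order.TTheory GRing.Theory Num.Theory.
Local Open Scope ring_scope.

Theorem proposition1 (R : realType) (L : nat)
  (b t : 'I_L -> 'I_L -> R) (p c rho N : R) (bC w : 'I_L -> R)
  (x : 'I_L -> 'I_L -> R)
  (hb0 : forall i j, 0 <= b i j)
  (hbpos : forall i, 0 < brow b i)
  (ht : forall i j, i != j -> 0 < t i j)
  (htii : forall i, t i i = 0)
  (hp : 0 < p) (hc : 0 <= c) (hrho0 : 0 < rho) (hrho1 : rho < 1) (hN : 0 < N)
  (hbC : forall i, 0 <= bC i /\ bC i <= brow b i)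
  (heq : CV_equilibrium b t p rho c N bC w x) :
  CV_optimal b t p rho c N bC x /\ capacity_multipliers b t p rho c N bC w x.
Proof.
case: heq => hw [hx0 hxfb hxN] hxmax hxin hcs.
have ht0 : forall i j, 0 <= t i j.
  move=> i j; case: (eqVneq i j) => [->|hij]; first by rewrite htii.
  exact: ltW (ht _ _ hij).
have hm0 : forall a, 0 <= \sum_(j < L) qmat b a j * t a j.
  move=> a; apply: sumr_ge0 => j _; apply: mulr_ge0 => //.
  by rewrite /qmat; apply: divr_ge0 => //; exact: ltW.
have htau0 : forall i a, 0 <= tau_dr b t i a.
  by move=> i a; rewrite /tau_dr; apply: addr_ge0.
set K := p * (1 - rho).
have hK : 0 <= K by apply: mulr_ge0; [exact: ltW | rewrite subr_ge0 ltW].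
set Wy := fun y : 'I_L -> 'I_L -> R => \sum_(i < L) \sum_(a < L) w a * y i a.
set W := \sum_(i < L) w i * bC i.
have hS : forall y, \sum_(i < L) w i * (bC i - inflow y i) = W - Wy y.
  move=> y; rewrite /W.
  under eq_bigr => i _ do rewrite mulrBr.
  rewrite sumrB; congr (_ - _).
  rewrite /Wy /inflow.
  under eq_bigr => i _ do rewrite mulr_sumr.
  by rewrite exchange_big.
have hF : forall y, fleet_use b t w y = drive_time b t y + Wy y.
  move=> y; rewrite /fleet_use /drive_time /Wy -big_split; apply: eq_bigr => i _.
  by rewrite -big_split; apply: eq_bigr => a _; rewrite mulrDl.
have hrevK : forall y, nonneg_mat y -> revenue b t p rho c y <= K * fleet_use b t w y.
  move=> y hy; rewrite /revenue /fleet_use mulr_sumr; apply: ler_sum => i _.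
  rewrite mulr_sumr; apply: ler_sum => a _; rewrite mulrA; apply: ler_wpM2r => //.
  rewrite /rC /K; apply: (@le_trans _ _ (p * (1 - rho) * (\sum_(j < L) qmat b a j * t a j))).
    by rewrite lerBlDr lerDl; apply: mulr_ge0.
  apply: ler_wpM2l => //; rewrite /tau_dr; have := ht0 i a; have := hw a; lra.
have hscale : forall y, nonneg_mat y -> flow_balance b y -> 0 < fleet_use b t w y ->
    revenue b t p rho c y <= (fleet_use b t w y / N) * revenue b t p rho c x.
  move=> y hy hfb hfy.
  set k := N / fleet_use b t w y.
  have hk : 0 < k by apply: divr_gt0.
  pose y' := fun i a => k * y i a.
  have h1 : nonneg_mat y' by move=> i a; apply: mulr_ge0 => //; exact: ltW.
  have h2 : flow_balance b y'.
    move=> i; rewrite /y' -[RHS]mulr_sumr -hfb mulr_sumr; apply: eq_bigr => j _.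
    by rewrite mulrA -mulr_sumr.
  have h3 : fleet_use b t w y' = N.
    rewrite /fleet_use /y'.
    transitivity (k * fleet_use b t w y); last by rewrite /k divfK // gt_eqF.
    rewrite /fleet_use mulr_sumr; apply: eq_bigr => i _; rewrite mulr_sumr.
    by apply: eq_bigr => a _; rewrite mulrCA.
  have := hxmax _ h1 h2 h3.
  have -> : revenue b t p rho c y' = k * revenue b t p rho c y.
    rewrite /revenue /y' mulr_sumr; apply: eq_bigr => i _; rewrite mulr_sumr.
    by apply: eq_bigr => a _; rewrite mulrCA.
  move=> H.
  have -> : revenue b t p rho c y = (fleet_use b t w y / N) * (k * revenue b t p rho c y).
    rewrite /k; field.
    by rewrite !gt_eqF.
  apply: ler_wpM2l => //; apply: divr_ge0; exact: ltW.
have hS0 : \sum_(i < L) w i * (bC i - inflow x i) = 0 by apply: big1 => i _.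
have hxW : Wy x = W by move: (hS x); rewrite hS0 => /eqP; rewrite eq_sym subr_eq0 => /eqP.
have hdtx : drive_time b t x = N - W by move: (hF x); rewrite hxN hxW => ->; ring.
have hpos : forall y, nonneg_mat y -> 0 < revenue b t p rho c y -> 0 < fleet_use b t w y.
  move=> y hy hr; case: (ltP 0 (fleet_use b t w y)) => // hf.
  have h1 : K * fleet_use b t w y <= 0 by apply: mulr_ge0_le0.
  have := hrevK y hy; lra.
have hlag : forall y, nonneg_mat y -> flow_balance b y ->
    (CV_lagrangian b t p rho c N bC w y <= CV_lagrangian b t p rho c N bC w x)%E.
  move=> y hy hfb; rewrite /CV_lagrangian hS0 hS.
  case: (boolP (0 < revenue b t p rho c y)) => hry; last first.
    by rewrite /CV_obj (negbTE hry) addNye leNye.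
  have hfy := hpos y hy hry.
  have hsc := hscale y hy hfb hfy.
  set f := fleet_use b t w y in hfy hsc *.
  set ry := revenue b t p rho c y in hry hsc *.
  set rx := revenue b t p rho c x in hsc *.
  have hfN : 0 < f / N by apply: divr_gt0.
  have hrx : 0 < rx.
    rewrite ltNge; apply/negP => h.
    have : f / N * rx <= 0 by apply: mulr_ge0_le0 => //; exact: ltW.
    lra.
  rewrite /CV_obj -/ry -/rx hry hrx -!EFinD lee_fin.
  have key : ln ry <= f / N - 1 + ln rx.
    apply: (@le_trans _ _ (ln (f / N * rx))).
      by rewrite ler_ln ?posrE //; apply: mulr_gt0.
    rewrite lnM ?posrE //; apply: lerD => //.
    have := @le_ln1Dx R (f / N - 1); rewrite addrCA subrr addr0; apply; lra.
  have := ler_wpM2l (ltW hN) key.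
  have -> : N * (f / N - 1 + ln rx) = f - N + N * ln rx by field; rewrite gt_eqF.
  move: (hF y); rewrite -/f => hFy.
  rewrite hdtx; lra.
split; last by split.
split; first by split.
move=> y [hy hfb hyin].
apply: (le_trans _ (le_trans (hlag y hy hfb) _)).
  apply: leeDl; rewrite lee_fin; apply: sumr_ge0 => i _.
  by apply: mulr_ge0 => //; rewrite subr_ge0.
by rewrite /CV_lagrangian hS0 adde0.
Qed.
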